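(* Let $n\ge1$. As polynomials in the indeterminates $x$ and $y$ with coefficients in $\mathbb{Q}[\mathfrak{S}_n]$, \[\rho(x)\phi(y)=\rho(xy),\qquad \overline{\rho}(x)\phi(y)=\overline{\rho}(xy),\] where $\phi(y)=\sum_{\pi\in\mathfrak{S}_n}\binom{y+n-1-\operatorname{des}(\pi)}{n}\pi$, $\rho(x)=\sum_{\pi\in\mathfrak{S}_n}\Omega'(\pi;x/2)\pi$ and $\overline{\rho}(x)=\sum_{\pi\in\mathfrak{S}_n}\overline{\Omega}'(\pi;x/2)\pi$.
   Context: $\mathfrak{S}_n$ is the symmetric group on $[n]$, permutations are words $(\pi(1),\dots,\pi(n))$, and multiplication in $\mathbb{Q}[\mathfrak{S}_n]$ is composition. $\operatorname{des}(\pi)$ is the number of $i\in[n-1]$ with $\pi(i)>\pi(i+1)$, and $\binom{y+m}{n}$ denotes the polynomial $(y+m)(y+m-1)\cdots(y+m-n+1)/n!$ in $y$. Let $Z$ be a finite totally ordered set each of whose elements is ''plus-type'' or ''minus-type''. For $\pi\in\mathfrak{S}_n$ let $N(\pi;Z)$ be the number of sequences $(a_1,\dots,a_n)\in Z^n$ with $a_1\le\dots\le a_n$ such that for every $s\in[n-1]$: if $\pi(s)<\pi(s+1)$ then $a_s<a_{s+1}$ or ($a_s=a_{s+1}$ is plus-type); if $\pi(s)>\pi(s+1)$ then $a_s<a_{s+1}$ or ($a_s=a_{s+1}$ is minus-type). For a positive integer $k$, $\Omega'(\pi;k)=N(\pi;\{\bar1<1<\dots<\bar k<k\})$ and $\overline{\Omega}'(\pi;k)=N(\pi;\{0<\bar1<1<\dots<\overline{k-1}<k-1<\bar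 k\})$, with $0$ and unbarred $j$ plus-type and barred $\bar j$ minus-type. As functions of $k$ these are restrictions of unique polynomials with rational coefficients, denoted by the same symbols. *)

(* Defs.v *)
From Stdlib Require Import ClassicalEpsilon.
From mathcomp Require Import all_boot all_order all_algebra all_fingroup.
Set Implicit Arguments. Unset Strict Implicit. Unset Printing Implicit Defensive.
Import Order.TTheory GRing.Theory Num.Theory.
Local Open Scope ring_scope.

(* Permutations pi : 'S_n act on 'I_n = {0,...,n-1}; the word of pi is
   (pi 0, ..., pi (n-1)) (0-based shift of the paper's 1-based indexing). *)

Definition consec (n : nat) (i j : 'I_n) : bool := (val j == (val i).+1)%N.

Definition des (n : nat) (pi : 'S_n) : nat :=
  #|[set i : 'I_n | [exists j : 'I_n, consec i j && (pi j < pi i)%N]]|.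

(* N(pi; Z) where Z = 'I_m is totally ordered by its natural order and
   plus t = true iff t is plus-type (false = minus-type). *)
Definition Ncount (n m : nat) (plus : 'I_m -> bool) (pi : 'S_n) : nat :=
  #|[set a : {ffun 'I_n -> 'I_m} |
     [forall i : 'I_n, forall j : 'I_n, consec i j ==>
        [&& (a i <= a j)%N &
          if (pi i < pi j)%N
          then (a i < a j)%N || ((a i == a j) && plus (a i))
          else (a i < a j)%N || ((a i == a j) && ~~ plus (a i))]]]|.

(* Z = {bar1 < 1 < ... < bar k < k}: position t (0-based) in 'I_(2k) is
   plus-type iff t is odd. *)
Definition Omega'_count (n : nat) (pi : 'S_n) (k : nat) : nat :=
  Ncount (fun t : 'I_(k.*2) => odd t) pi.

(* Z = {0 < bar1 < 1 < ... < bar(k-1) < k-1 < bar k}: position t (0-based)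
   in 'I_(2k) is plus-type iff t is even. *)
Definition Omegabar'_count (n : nat) (pi : 'S_n) (k : nat) : nat :=
  Ncount (fun t : 'I_(k.*2) => ~~ odd t) pi.

(* "the unique polynomial with rational coefficients whose restriction to
   positive integers is f" (chosen with Hilbert's epsilon). *)
Definition poly_of_count (f : nat -> nat) : {poly rat} :=
  epsilon (inhabits 0) (fun P : {poly rat} =>
    forall k : nat, (0 < k)%N -> P.[k%:R] = (f k)%:R).

Definition Omega'_poly (n : nat) (pi : 'S_n) : {poly rat} :=
  poly_of_count (Omega'_count pi).
Definition Omegabar'_poly (n : nat) (pi : 'S_n) : {poly rat} :=
  poly_of_count (Omegabar'_count pi).

Definition binom_poly (m : int) (n : nat) : {poly rat} :=
  (n`!%:R)^-1 *: \prod_(i < n) ('X + (m - (i : nat)%:Z)%:~R%:P).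

(* Bivariate polynomials Q[x,y] = {poly {poly rat}}: x is the inner
   variable, y the outer one. *)
Definition bipoly := {poly {poly rat}}.
Definition xvar : bipoly := ('X)%:P.
Definition yvar : bipoly := 'X.

Definition evalQ (p : {poly rat}) (t : bipoly) : bipoly :=
  (map_poly (fun c : rat => c%:P%:P) p).[t].

(* elements of Q[x,y][S_n] as coefficient families 'S_n -> bipoly;
   product = convolution with composition (tau o upsilon)(i) = tau (upsilon i) *)
Definition galg_mul (n : nat) (a b : 'S_n -> bipoly) : 'S_n -> bipoly :=
  fun sigma => \sum_(tau : 'S_n) \sum_(ups : 'S_n |
                  [forall i : 'I_n, tau (ups i) == sigma i]) a tau * b ups.

Definition phi (n : nat) (t : bipoly) : 'S_n -> bipoly :=
  fun pi => evalQ (binom_poly ((n%:Z - 1) - (des pi)%:Z) n) t.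

Definition rho (n : nat) (t : bipoly) : 'S_n -> bipoly :=
  fun pi => evalQ (Omega'_poly pi) (t * (2%:R^-1)%:P%:P).

Definition rhobar (n : nat) (t : bipoly) : 'S_n -> bipoly :=
  fun pi => evalQ (Omegabar'_poly pi) (t * (2%:R^-1)%:P%:P).

(* Main.v *)
Require Import Defs.
From Stdlib Require Import ClassicalEpsilon FunctionalExtensionality.
From mathcomp Require Import all_boot all_order all_algebra all_fingroup.
From mathcomp Require Import zify ring.
Import GRing.Theory.
Open Scope nat_scope.



Lemma card_bij_in (T T' : finType) (A : {set T}) (B : {set T'})
  (f : T -> T') (g : T' -> T) :
  {in A, forall x, f x \in B} -> {in B, forall y, g y \in A} ->
  {in A, cancel f g} -> {in B, cancel g f} -> #|A| = #|B|.
Proof.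
move=> fAB gBA fK gK; apply/eqP; rewrite eqn_leq; apply/andP; split.
- rewrite -(card_in_imset (f:=f) (D:=A)); last exact: can_in_inj fK.
  apply: subset_leq_card; apply/subsetP=> y /imsetP [x xA ->]; exact: fAB.
- rewrite -(card_in_imset (f:=g) (D:=B)); last exact: can_in_inj gK.
  apply: subset_leq_card; apply/subsetP=> y /imsetP [x xA ->]; exact: gBA.
Qed.

Lemma card_ltset n (x : nat) : x <= n -> #|[set t : 'I_n | t < x]| = x.
Proof.
move=> xn.
have -> : [set t : 'I_n | t < x] = [set widen_ord xn t | t : 'I_x].
  apply/setP=> t; rewrite inE; apply/idP/imsetP.
  - by move=> tx; exists (Ordinal tx) => //; apply: val_inj.
  - by case=> s _ ->; rewrite /= ltn_ord.
rewrite card_imset ?card_ord //; move=> a b /(congr1 val) /= ab; exact: val_inj.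
Qed.

Lemma lexlt N a b a' b' : b < N -> b' < N ->
  (a * N + b < a' * N + b') = (a < a') || ((a == a') && (b < b')).
Proof.
move=> bN b'N; case: (ltngtP a a') => [aa|aa|<-].
- apply: (@leq_trans (a.+1 * N)); first by rewrite mulSn addnC ltn_add2r.
  by rewrite (leq_trans _ (leq_addr _ _)) // leq_mul2r aa orbT.
- apply/negbTE; rewrite -leqNgt.
  apply: (@leq_trans (a'.+1 * N)); first by rewrite mulSn addnC leq_add2r ltnW.
  by rewrite (leq_trans _ (leq_addr _ _)) // leq_mul2r aa orbT.
- by rewrite ltn_add2l.
Qed.

Lemma lexeq N a b a' b' : b < N -> b' < N ->
  (a * N + b == a' * N + b') = (a == a') && (b == b').
Proof.
move=> bN b'N; apply/idP/idP; last by case/andP=> /eqP -> /eqP ->.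
move=> /eqP e.
have N0 : 0 < N by apply: leq_ltn_trans bN.
have ea : a = a'.
  by have := congr1 (fun x => x %/ N) e; rewrite /= !divnMDl // !divn_small // !addn0.
have eb : b = b'.
  by have := congr1 (fun x => x %% N) e; rewrite /= !modnMDl !modn_small.
by rewrite ea eb !eqxx.
Qed.

Definition consec' := consec.

Lemma consec_ind n (Q : 'I_n -> Prop) :
  (forall i : 'I_n, val i = 0 -> Q i) ->
  (forall i j : 'I_n, consec i j -> Q i -> Q j) -> forall i, Q i.
Proof.
move=> H0 HS.
suff: forall d (i : 'I_n), val i = d -> Q i by move=> H i; exact: (H _ i erefl).
elim=> [|d IH] i hi; first exact: H0.
have dn : d < n by apply: ltn_trans (ltn_ord i); rewrite hi.
apply: (HS (Ordinal dn)); first by rewrite /consec hi.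
exact: IH.
Qed.

Lemma consec_homo n (r : nat -> nat -> Prop) (f : 'I_n -> nat) :
  (forall y x z, r x y -> r y z -> r x z) ->
  (forall i j : 'I_n, consec i j -> r (f i) (f j)) ->
  forall i j : 'I_n, i < j -> r (f i) (f j).
Proof.
move=> rt rs i j; move: j; apply: consec_ind.
- by move=> j ->.
- move=> j j' jj' IH ij'; move: (jj'); rewrite /consec => /eqP hj.
  move: ij'; rewrite hj ltnS leq_eqVlt => /orP [/eqP hij|hij].
  + have -> : i = j by apply: val_inj. exact: rs.
  + exact: rt (IH hij) (rs _ _ jj').
Qed.


Section Rank.
Variable n : nat.
Variable f : 'I_n -> nat.
Hypothesis finj : injective f.

Definition rk (i : 'I_n) : nat := #|[set j : 'I_n | f j < f i]|.

Lemma rk_lt i : rk i < n.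
Proof.
rewrite /rk -[X in _ < X](card_ord n) -cardsT; apply: proper_card; apply/properP; split.
  by apply/subsetP=> x; rewrite inE.
by exists i; rewrite ?inE ?ltnn.
Qed.

Lemma lt_rk i j : f i < f j -> rk i < rk j.
Proof.
move=> fij; apply: proper_card; apply/properP; split.
  by apply/subsetP=> x; rewrite !inE => h; apply: ltn_trans h fij.
by exists i; rewrite !inE ?ltnn.
Qed.

Lemma rk_mono i j : (rk i < rk j) = (f i < f j).
Proof.
case: (ltngtP (f i) (f j)) => [h|h|h]; first exact: lt_rk.
  by apply/negbTE; rewrite -leqNgt ltnW // lt_rk.
by move/finj: h => ->; rewrite ltnn.
Qed.

Definition rko (i : 'I_n) : 'I_n := Ordinal (rk_lt i).

Lemma rko_inj : injective rko.
Proof.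
move=> i j /(congr1 val) /= e.
case: (ltngtP (f i) (f j)) => [h|h|h]; last exact: finj.
  by have := lt_rk _ _ h; rewrite e ltnn.
by have := lt_rk _ _ h; rewrite e ltnn.
Qed.

Definition rkperm : 'S_n := perm rko_inj.

Lemma rkperm_mono i j : (rkperm i < rkperm j) = (f i < f j).
Proof. by rewrite !permE /= rk_mono. Qed.

Lemma rkperm_uniq (a : 'S_n) : (forall i j, (a i < a j) = (f i < f j)) -> a = rkperm.
Proof.
move=> H; apply/permP => i; apply: val_inj; rewrite permE /= /rk.
have -> : [set j | f j < f i] = a @^-1: [set t : 'I_n | t < a i].
  by apply/setP=> j; rewrite !inE H.
by rewrite card_preimset ?card_ltset //; [apply: ltnW | exact: perm_inj].
Qed.
End Rank.
Arguments rk {n}.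
Arguments rkperm {n f}.
Arguments rkperm_mono {n f}.
Arguments rkperm_uniq {n f}.

Definition sg n (b : bool) (i : 'I_n) : nat := if b then val i else n.-1 - i.
Arguments sg {n}.

Lemma sg_lt n b (i : 'I_n) : sg b i < n.
Proof. have := ltn_ord i; rewrite /sg; case: b => /=; lia. Qed.

Lemma sg_inj n b : injective (@sg n b).
Proof.
move=> i j; rewrite /sg; have := ltn_ord i; have := ltn_ord j.
case: b => /= ?? e; apply: val_inj => //=; lia.
Qed.

Definition key n m (P : nat -> bool) (u : {ffun 'I_n -> 'I_m}) (i : 'I_n) : nat :=
  u i * n + sg (P (u i)) i.
Arguments key {n m}.

Lemma key_inj n m (P : nat -> bool) (u : {ffun 'I_n -> 'I_m}) : injective (key P u).
Proof.
move=> i j /eqP; rewrite /key lexeq ?sg_lt // => /andP [/eqP e1 /eqP].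
by rewrite e1 => /sg_inj.
Qed.

Arguments key_inj {n m}.

Definition std n m (P : nat -> bool) (u : {ffun 'I_n -> 'I_m}) : 'S_n := rkperm (key_inj P u).
Arguments std {n m}.

Lemma std_mono n m (P : nat -> bool) (u : {ffun 'I_n -> 'I_m}) i j :
  (std P u i < std P u j) = (key P u i < key P u j).
Proof. exact: rkperm_mono. Qed.

Lemma std_uniq n m (P : nat -> bool) (u : {ffun 'I_n -> 'I_m}) (a : 'S_n) :
  (forall i j, (a i < a j) = (key P u i < key P u j)) -> a = std P u.
Proof. exact: rkperm_uniq. Qed.

Definition Wset n m (P : nat -> bool) (g : 'S_n) := [set u : {ffun 'I_n -> 'I_m} | std P u == g].


Lemma key_consec n m (P : nat -> bool) (a : 'I_n -> 'I_m) (pi : 'S_n) s t : s != t ->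
  [&& a s <= a t &
        if pi s < pi t
        then (a s < a t) || ((a s == a t) && P (a s))
        else (a s < a t) || ((a s == a t) && ~~ P (a s))] =
  (a s * n + sg (P (a s)) (pi s) < a t * n + sg (P (a t)) (pi t)).
Proof.
move=> st; rewrite lexlt ?sg_lt //.
case: (ltngtP (a s) (a t)) => [h|h|h] /=.
- by case: ifP.
- by [].
- rewrite h (val_inj h) eqxx /=; have := ltn_ord (pi s); have := ltn_ord (pi t).
  have := @perm_inj _ pi s t.
  case: (P (a t)); rewrite /sg /=; case: (ltngtP (pi s) (pi t)) => //=; try lia.
  by move=> e i _ _; move: st; rewrite (i (val_inj e)) eqxx.
Qed.

Lemma consec_neq n (s t : 'I_n) : consec s t -> s != t.
Proof. rewrite /consec => /eqP h; apply/eqP => e; move: h; rewrite e; lia. Qed.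

Lemma consec_lt n (s t : 'I_n) : consec s t -> s < t.
Proof. by rewrite /consec => /eqP ->. Qed.

Lemma NcountW n m (P : nat -> bool) (pi : 'S_n) :
  Ncount (fun t : 'I_m => P t) pi = #|Wset n m P (pi^-1)%g|.
Proof.
rewrite /Ncount.
apply: (@card_bij_in _ _ _ _ (fun a : {ffun 'I_n -> 'I_m} => [ffun i => a ((pi^-1)%g i)])
                    (fun u : {ffun 'I_n -> 'I_m} => [ffun s => u (pi s)])).
- move=> a; rewrite !inE => /forallP H; apply/eqP; apply/esym/std_uniq => i j.
  rewrite -{2}(permKV pi i) -{2}(permKV pi j).
  move: ((pi^-1)%g i) ((pi^-1)%g j) => s t; rewrite /key !ffunE !permK.
  pose F s := a s * n + sg (P (a s)) (pi s).
  have hc : forall s t, consec s t -> F s < F t.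
    move=> s' t' hst; rewrite /F -key_consec ?consec_neq //.
    by move: (H s') => /forallP /(_ t') /implyP; apply.
  have hl := @consec_homo _ (fun x y => x < y) F ltn_trans hc.
  case: (ltngtP s t) => [h|h|h].
  + by rewrite hl.
  + by apply/esym/negbTE; rewrite -leqNgt ltnW // hl.
  + by rewrite (val_inj h) ltnn.
- move=> u; rewrite !inE => /eqP hu.
  apply/forallP => s; apply/forallP => t; apply/implyP => hst.
  rewrite key_consec ?consec_neq // !ffunE.
  have := std_mono _ _ P u (pi s) (pi t); rewrite hu !permK /key => <-.
  exact: consec_lt.
- by move=> a _; apply/ffunP => i; rewrite !ffunE permK.
- by move=> u _; apply/ffunP => i; rewrite !ffunE permKV.
Qed.


Lemma sum_std n N (Q : nat -> bool) (F : 'S_n -> nat) :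
  \sum_(u : {ffun 'I_n -> 'I_N}) F (std Q u) = \sum_(a : 'S_n) #|Wset n N Q a| * F a.
Proof.
rewrite (partition_big (std Q) predT) //=; apply: eq_bigr => a _.
rewrite -sum_nat_const; apply: eq_big => [u|u]; first by rewrite inE.
by move/eqP ->.
Qed.

Section Product.
Variables (n K m M : nat) (P : nat -> bool).
Hypothesis hK : 0 < K.
Hypothesis hM : M = m * K.
Hypothesis hP : forall x y, y < K -> P (x * K + y) = P y.

Definition PT : nat -> bool := fun _ => true.

Lemma pair_lt (x : 'I_m) (y : 'I_K) : x * K + y < M.
Proof.
rewrite hM; apply: (@leq_trans (x.+1 * K)); first by rewrite mulSn addnC ltn_add2r.
by rewrite leq_mul2r ltn_ord orbT.
Qed.

Lemma div_lt (x : 'I_M) : x %/ K < m.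
Proof. by rewrite ltn_divLR // -hM. Qed.

Definition Phi (uv : {ffun 'I_n -> 'I_K} * {ffun 'I_n -> 'I_m}) : {ffun 'I_n -> 'I_M} :=
  [ffun i => Ordinal (pair_lt (uv.2 (std P uv.1 i)) (uv.1 i))].

Definition Psi1 (w : {ffun 'I_n -> 'I_M}) : {ffun 'I_n -> 'I_K} :=
  [ffun i => Ordinal (ltn_pmod (w i) hK)].

Definition Psi (w : {ffun 'I_n -> 'I_M}) : {ffun 'I_n -> 'I_K} * {ffun 'I_n -> 'I_m} :=
  (Psi1 w, [ffun t => Ordinal (div_lt (w (((std P (Psi1 w))^-1)%g t)))]).

Lemma PsiK : cancel Phi Psi.
Proof.
move=> [u v]; rewrite /Psi.
have e1 : Psi1 (Phi (u, v)) = u.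
  by apply/ffunP => i; apply: val_inj; rewrite !ffunE /= modnMDl modn_small.
rewrite e1; congr pair; apply/ffunP => t; apply: val_inj.
by rewrite !ffunE /= permKV divnMDl // divn_small // addn0.
Qed.

Lemma PhiK : cancel Psi Phi.
Proof.
move=> w; apply/ffunP => i; apply: val_inj; rewrite /Phi /Psi !ffunE /= permK.
by rewrite -divn_eq.
Qed.

Lemma lt_mulK b s N (bK : b < K) (sN : s < N) : b * N + s < K * N.
Proof.
apply: (@leq_trans (b.+1 * N)); first by rewrite mulSn addnC ltn_add2r.
by rewrite leq_mul2r bK orbT.
Qed.

Lemma std_Phi u v : std P (Phi (u, v)) = (std P u * std PT v)%g.
Proof.
apply/esym/std_uniq => i j; rewrite !permM std_mono /key /PT.
have sgT (x : 'I_n) : sg true x = x by [].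
rewrite !sgT lexlt ?ltn_ord // std_mono /key !ffunE /= !hP ?ltn_ord //.
by rewrite !mulnDl -!mulnA -!addnA [in RHS]lexlt ?lt_mulK ?sg_lt ?ltn_ord.
Qed.

Lemma card_W_prod g : #|Wset n M P g| =
  \sum_(a : 'S_n) \sum_(b : 'S_n | (a * b == g)%g) #|Wset n K P a| * #|Wset n m PT b|.
Proof.
transitivity #|[set uv : {ffun 'I_n -> 'I_K} * {ffun 'I_n -> 'I_m} |
                 (std P uv.1 * std PT uv.2 == g)%g]|.
  apply: (@card_bij_in _ _ _ _ Psi Phi).
  - by move=> w; rewrite !inE -std_Phi -surjective_pairing PhiK.
  - by move=> [u v]; rewrite !inE /= std_Phi.
  - by move=> w _; exact: PhiK.
  - by move=> uv _; exact: PsiK.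
have -> : #|[set uv : {ffun 'I_n -> 'I_K} * {ffun 'I_n -> 'I_m} |
                 (std P uv.1 * std PT uv.2 == g)%g]| =
   \sum_(u : {ffun 'I_n -> 'I_K}) \sum_(v : {ffun 'I_n -> 'I_m})
       nat_of_bool ((std P u * std PT v)%g == g).
  rewrite pair_big /= -sum1_card big_mkcond [RHS]big_mkcond /=.
  by apply: eq_bigr => p _; rewrite inE; case: (_ == _).
rewrite (eq_bigr (fun u => \sum_(b : 'S_n) #|Wset n m PT b| * nat_of_bool ((std P u * b)%g == g))); last first.
  by move=> u _; rewrite (@sum_std n m PT (fun b => nat_of_bool ((std P u * b)%g == g))).
rewrite (@sum_std n K P (fun a => \sum_(b : 'S_n) #|Wset n m PT b| * nat_of_bool ((a * b)%g == g))).
apply: eq_bigr => a _; rewrite big_distrr [RHS]big_mkcond /=.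
by apply: eq_bigr => b _; case: (_ == _); rewrite ?muln0 ?muln1 // mulnC.
Qed.
End Product.

Lemma cond_perm n (t u s : 'S_n) : [forall i, t (u i) == s i] = ((u * t)%g == s).
Proof.
apply/forallP/eqP => [H|<- i]; last by rewrite permM.
by apply/permP => i; rewrite permM; exact/eqP.
Qed.

Lemma prodN n K m M (P : nat -> bool) (hK : 0 < K) (hM : M = m * K)
  (hP : forall x y, y < K -> P (x * K + y) = P y) (s : 'S_n) :
  Ncount (fun t : 'I_M => P t) s =
  \sum_(a : 'S_n) \sum_(b : 'S_n | [forall i, a (b i) == s i])
     Ncount (fun t : 'I_K => P t) a * Ncount (fun t : 'I_m => PT t) b.
Proof.
rewrite NcountW (card_W_prod _ _ _ _ _ hK hM hP) (reindex_inj invg_inj) /=.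
apply: eq_bigr => a _; rewrite (reindex_inj invg_inj) /=.
apply: eq_big => [b|b _]; last by rewrite !NcountW.
by rewrite cond_perm -invMg eqg_invLR invgK.
Qed.


Lemma card_sum (T : finType) (p : pred T) : #|[set x | p x]| = \sum_x (p x : nat).
Proof.
rewrite -sum1_card big_mkcond /=; apply: eq_bigr => x _; rewrite inE.
by case: (p x).
Qed.

Lemma sorted_tnth n N (t : n.-tuple 'I_N) :
  sorted ltn (map val t) = [forall i, forall j, consec i j ==> (tnth t i < tnth t j)].
Proof.
have E (i : 'I_n) : nth 0 (map val t) i = tnth t i.
  by rewrite (nth_map (tnth t i)) ?size_tuple // -tnth_nth.
apply/(sortedP 0)/forallP => [H i|H k].
  apply/forallP => j; apply/implyP => /eqP hj.
  have hi : (val i).+1 < n by rewrite -hj ltn_ord.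
  have := H i; rewrite size_map size_tuple => /(_ hi).
  by rewrite -hj !E.
rewrite size_map size_tuple => hk.
have k1 : k < n by apply: ltn_trans hk.
have := H (Ordinal k1) => /forallP /(_ (Ordinal hk)) /implyP.
by rewrite /consec /= eqxx => /(_ erefl); rewrite -(E (Ordinal k1)) -(E (Ordinal hk)).
Qed.

Definition Sinc n N := [set c : {ffun 'I_n -> 'I_N} |
  [forall i, forall j, consec i j ==> (c i < c j)]].

Lemma card_Sinc n N : #|Sinc n N| = 'C(N, n).
Proof.
rewrite -card_ltn_sorted_tuples.
apply: (@card_bij_in _ _ _ _ (fun c : {ffun 'I_n -> 'I_N} => [tuple c i | i < n])
   (fun t : n.-tuple 'I_N => [ffun i => tnth t i])).
- move=> c; rewrite !inE sorted_tnth => /forallP H; apply/forallP => i.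
  by apply/forallP => j; rewrite !tnth_mktuple; move: (H i) => /forallP.
- move=> t; rewrite !inE sorted_tnth => /forallP H; apply/forallP => i.
  by apply/forallP => j; rewrite !ffunE; move: (H i) => /forallP.
- by move=> c _; apply/ffunP => i; rewrite ffunE tnth_mktuple.
- by move=> t _; apply: eq_from_tnth => i; rewrite tnth_mktuple ffunE.
Qed.

Lemma valid_PT m (x y : 'I_m) (b : bool) :
  [&& x <= y & if b then (x < y) || ((x == y) && PT x)
               else (x < y) || ((x == y) && ~~ PT x)] = (if b then x <= y else x < y).
Proof.
rewrite /PT /= andbT andbF orbF; case: b.
  by rewrite -val_eqE /= [(_ == _) || _]orbC -leq_eqVlt andbb.
by case: (ltngtP x y) => //= h; rewrite ltnW.
Qed.

Section Bcount.
Variables (n' : nat) (u : 'S_n'.+1).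
Local Notation n := n'.+1.

Definition asc (s : 'I_n) : bool := [exists t, consec s t && (u s < u t)].
Definition dsc (s : 'I_n) : bool := [exists t, consec s t && (u t < u s)].
Definition A (i : 'I_n) : nat := \sum_(s : 'I_n | s < i) asc s.

Lemma asc_consec i j : consec i j -> asc i = (u i < u j).
Proof.
move=> hij; apply/existsP/idP => [[t /andP [ht h]]|h]; last by exists j; rewrite hij h.
suff -> : j = t by [].
by apply: val_inj; move: hij ht; rewrite /consec => /eqP -> /eqP ->.
Qed.

Lemma dsc_consec i j : consec i j -> dsc i = (u j < u i).
Proof.
move=> hij; apply/existsP/idP => [[t /andP [ht h]]|h]; last by exists j; rewrite hij h.
suff -> : j = t by [].
by apply: val_inj; move: hij ht; rewrite /consec => /eqP -> /eqP ->.
Qed.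

Lemma A_consec i j : consec i j -> A j = A i + asc i.
Proof.
move=> hij; rewrite /A (bigD1 i) /=; last exact: consec_lt.
rewrite addnC; congr (_ + _); apply: eq_bigl => s.
move: hij; rewrite /consec => /eqP ->; rewrite ltnS -val_eqE /=.
by case: (ltngtP s i).
Qed.

Lemma A_le i : A i <= i.
Proof.
apply: (@leq_trans (\sum_(s : 'I_n | s < i) 1)).
  by apply: leq_sum => s _; case: asc.
by rewrite sum1dep_card card_ltset // ltnW.
Qed.

Definition lastn : 'I_n := ord_max.

Lemma A_last : A lastn + des u = n'.
Proof.
rewrite /des card_sum (bigID (fun s : 'I_n => s < n')) /=.
rewrite [X in _ + (_ + X)]big1; last first.
  move=> s hs; case: existsP => // [[t /andP [ht _]]]; exfalso.
  move: ht hs; rewrite /consec => /eqP ht; have := ltn_ord t; rewrite ht ltnS => h1 h2; by rewrite h1 in h2.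
rewrite /= addn0 /A /= -big_split /=.
rewrite (eq_bigr (fun _ => 1)); first by rewrite sum1dep_card card_ltset.
move=> s hs; have hs1 : s.+1 < n by [].
have hc : consec s (Ordinal hs1) by rewrite /consec.
rewrite (asc_consec _ _ hc); have := dsc_consec _ _ hc; rewrite /dsc => ->.
have := @perm_inj _ u s (Ordinal hs1).
case: (ltngtP (u s) (u (Ordinal hs1))) => // e /(_ (val_inj e)) /(congr1 val) /= h.
lia.
Qed.

Lemma A_mono (i j : 'I_n) : i <= j -> A i <= A j.
Proof.
rewrite leq_eqVlt => /orP [/eqP e|h]; first by rewrite (val_inj e).
apply: (@consec_homo _ (fun x y => x <= y) A leq_trans) h => i' j' hij.
by rewrite (A_consec _ _ hij) leq_addr.
Qed.

Lemma A_X (i : 'I_n) : A i <= n' - des u.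
Proof.
have := A_last; have : A i <= A lastn by apply: A_mono; rewrite /= -ltnS.
lia.
Qed.

Lemma B_count m' : Ncount (fun t : 'I_m'.+1 => PT t) u = 'C((m' + (n' - des u)).+1, n).
Proof.
rewrite -card_Sinc /Ncount.
set X := n' - des u.
have bound_a (a : {ffun 'I_n -> 'I_m'.+1}) i : a i + A i < (m' + X).+1.
  have := ltn_ord (a i); have := A_X i; rewrite -/X; lia.
have c_ge (c : {ffun 'I_n -> 'I_(m' + X).+1}) : c \in Sinc n (m' + X).+1 -> forall i, A i <= c i.
  rewrite inE => /forallP H.
  suff : forall i : 'I_n, i <= c i by move=> h i; apply: leq_trans (A_le i) (h i).
  apply: consec_ind => [i ->|i j hij hi]; first by [].
  move: (H i) => /forallP /(_ j) /implyP /(_ hij).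
  by move: hij; rewrite /consec => /eqP -> h; apply: leq_ltn_trans hi h.
have c_mono (c : {ffun 'I_n -> 'I_(m' + X).+1}) : c \in Sinc n (m' + X).+1 ->
    forall i j, consec i j -> c i - A i <= c j - A j.
  move=> hc i j hij; have := c_ge c hc i; move: hc; rewrite inE => /forallP H.
  move: (H i) => /forallP /(_ j) /implyP /(_ hij).
  rewrite (A_consec _ _ hij); have := leq_b1 (asc i); lia.
have c_bound (c : {ffun 'I_n -> 'I_(m' + X).+1}) : c \in Sinc n (m' + X).+1 ->
    forall i, c i - A i < m'.+1.
  move=> hc i; have hl : c i - A i <= c lastn - A lastn.
    move: (leq_ord i); rewrite leq_eqVlt => /orP [/eqP e|h].
      by have -> : i = lastn by apply: val_inj.
    exact: (@consec_homo _ (fun x y => x <= y) (fun i => c i - A i) leq_trans (c_mono c hc)).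
  have := ltn_ord (c lastn); have := A_last; rewrite -/X; lia.
apply: (@card_bij_in _ _ _ _
   (fun a : {ffun 'I_n -> 'I_m'.+1} => [ffun i => inord (a i + A i)] : {ffun 'I_n -> 'I_(m' + X).+1})
   (fun c : {ffun 'I_n -> 'I_(m' + X).+1} => [ffun i => inord (c i - A i)] : {ffun 'I_n -> 'I_m'.+1})).
- move=> a; rewrite !inE => /forallP H; apply/forallP => i; apply/forallP => j.
  apply/implyP => hij; move: (H i) => /forallP /(_ j) /implyP /(_ hij).
  rewrite valid_PT !ffunE !inordK ?bound_a // (A_consec _ _ hij) (asc_consec _ _ hij).
  by case: (u i < u j); lia.
- move=> c hc; have := c_mono c hc; have := c_ge c hc; have := c_bound c hc.
  move: hc; rewrite !inE => /forallP H hb hg hm; apply/forallP => i; apply/forallP => j.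
  apply/implyP => hij; rewrite valid_PT !ffunE !inordK ?hb //.
  have := hm i j hij; have := hg i; move: (H i) => /forallP /(_ j) /implyP /(_ hij).
  rewrite (A_consec _ _ hij) (asc_consec _ _ hij).
  by case: (u i < u j) => /=; lia.
- move=> a _; apply/ffunP => i; apply: val_inj; rewrite !ffunE /=.
  by rewrite (inordK (bound_a a i)) addnK inordK.
- move=> c hc; apply/ffunP => i; rewrite !ffunE /=.
  by rewrite (inordK (c_bound c hc i)) subnK ?(c_ge c hc) // inord_val.
Qed.
End Bcount.

Import Num.Theory.
Local Open Scope ring_scope.


Lemma ffactR (N k : nat) : \prod_(i < k) (N%:R - i%:R : rat) = (N ^_ k)%:R.
Proof.
elim: k => [|k IH]; first by rewrite big_ord0 ffactn0.
rewrite big_ord_recr /= IH ffactnSr natrM.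
case: (leqP k N) => h; first by rewrite natrB.
by rewrite ffact_small // mul0r mul0r.
Qed.

Lemma binom_eval (n' d m' : nat) (hd : (d <= n')%N) :
  (binom_poly ((n'.+1%:Z - 1) - d%:Z) n'.+1).[m'.+1%:R] =
  ('C((m' + (n' - d)).+1, n'.+1))%:R.
Proof.
rewrite /binom_poly hornerZ horner_prod.
set N := (m' + (n' - d)).+1.
rewrite (eq_bigr (fun i : 'I_n'.+1 => N%:R - (i : nat)%:R)); last first.
  move=> i _; rewrite hornerD hornerX hornerC.
  have -> : (m'.+1%:R : rat) = (m'.+1%:Z)%:~R by [].
  rewrite -intrD.
  have -> : (N%:R - (i : nat)%:R : rat) = ((N%:Z - (i : nat)%:Z))%:~R.
    by rewrite intrB.
  congr intr; rewrite /N; lia.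
rewrite ffactR -bin_ffact natrM mulrC -mulrA mulfV ?mulr1 //.
by rewrite pnatr_eq0 -lt0n fact_gt0.
Qed.

Definition ev (a b : rat) (q : bipoly) : rat :=
  horner_eval b (map_poly (horner_eval a) q).

Lemma evM a b p q : ev a b (p * q) = ev a b p * ev a b q.
Proof. by rewrite /ev !rmorphM. Qed.

Lemma evB a b p q : ev a b (p - q) = ev a b p - ev a b q.
Proof. by rewrite /ev !rmorphB. Qed.

Lemma ev_sum a b (I : finType) (P : pred I) (F : I -> bipoly) :
  ev a b (\sum_(i | P i) F i) = \sum_(i | P i) ev a b (F i).
Proof. by rewrite /ev !rmorph_sum. Qed.

Lemma evC a b (c : rat) : ev a b c%:P%:P = c.
Proof. by rewrite /ev map_polyC /= horner_evalE hornerC horner_evalE hornerC. Qed.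

Lemma evX a b : ev a b xvar = a.
Proof. by rewrite /ev /xvar map_polyC /= !horner_evalE hornerC hornerX. Qed.

Lemma evY a b : ev a b yvar = b.
Proof. by rewrite /ev /yvar map_polyX !horner_evalE hornerX. Qed.

Lemma ev_evalQ a b p t : ev a b (evalQ p t) = p.[ev a b t].
Proof.
rewrite /evalQ /ev -horner_map /= -horner_map -!map_poly_comp map_poly_id //=.
move=> c _ /=; rewrite map_polyC /= !horner_evalE !hornerC //.
Qed.

Lemma poly_eq0_nat (p : {poly rat}) (f : nat -> rat) (finj : injective f) :
  (forall k, p.[f k] = 0) -> p = 0.
Proof.
move=> H; apply/eqP; apply/negPn/negP => hp.
suff : (size p < size p)%N by rewrite ltnn.
have := @max_poly_roots _ p (map f (iota 0 (size p))) hp.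
rewrite size_map size_iota; apply.
  by apply/allP => x /mapP [k _ ->]; rewrite /root H.
by rewrite (map_inj_uniq finj) iota_uniq.
Qed.

Lemma bipoly_eq0 (q : bipoly) :
  (forall k m, ev (k.+1.*2)%:R m.+1%:R q = 0) -> q = 0.
Proof.
move=> H; apply/polyP => i; rewrite coef0.
apply: (@poly_eq0_nat _ (fun k => (k.+1.*2)%:R)).
  move=> x y /eqP; rewrite eqr_nat => /eqP h; move: h; rewrite -!muln2; lia.
move=> k.
have -> : (q`_i).[(k.+1.*2)%:R] = (map_poly (horner_eval (k.+1.*2)%:R) q)`_i.
  by rewrite coef_map /= horner_evalE.
suff -> : map_poly (horner_eval (k.+1.*2)%:R) q = 0 by rewrite coef0.
apply: (@poly_eq0_nat _ (fun m => m.+1%:R)).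
  by move=> x y /eqP; rewrite eqr_nat => /eqP [].
by move=> m; rewrite -(H k m) /ev horner_evalE.
Qed.


Definition C n (P : nat -> bool) (k : nat) (s : 'S_n) : nat :=
  Ncount (fun t : 'I_(k.*2) => P t) s.
Arguments C {n}.

Lemma C_prod n (P : nat -> bool) (hP : forall a b, P (a.*2 + b)%N = P b) k m (s : 'S_n)
  (hk : (0 < k)%N) :
  C P (k * m) s = (\sum_(a : 'S_n) \sum_(b : 'S_n | [forall i, a (b i) == s i])
     C P k a * Ncount (fun t : 'I_m => PT t) b)%N.
Proof.
apply: prodN.
- by rewrite double_gt0.
- by rewrite -!muln2; ring.
- by move=> x y _; rewrite -doubleMr hP.
Qed.

Lemma des_le n' (u : 'S_n'.+1) : (des u <= n')%N.
Proof. have := A_last n' u; lia. Qed.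

Lemma C_spec n' (P : nat -> bool) (hP : forall a b, P (a.*2 + b)%N = P b) (s : 'S_n'.+1) k :
  (0 < k)%N -> (poly_of_count (fun k => C P k s)).[k%:R] = (C P k s)%:R.
Proof.
move: k; rewrite /poly_of_count.
apply: (@epsilon_spec _ (inhabits 0) (fun Q : {poly rat} =>
   forall k, (0 < k)%N -> Q.[k%:R] = (C P k s)%:R)).
exists (\sum_(a : 'S_n'.+1) \sum_(b : 'S_n'.+1 | [forall i, a (b i) == s i])
          (C P 1 a)%:R *: binom_poly ((n'.+1%:Z - 1) - (des b)%:Z) n'.+1).
case=> // k _.
have -> : C P k.+1 s = C P (1 * k.+1) s by rewrite mul1n.
rewrite C_prod // natr_sum horner_sum.
apply: eq_bigr => a _; rewrite natr_sum horner_sum; apply: eq_bigr => b _.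
by rewrite hornerZ binom_eval ?des_le // B_count natrM.
Qed.

Lemma main_gen n' (P : nat -> bool) (hP : forall a b, P (a.*2 + b)%N = P b)
  (F : 'S_n'.+1 -> {poly rat})
  (hF : forall s k, (0 < k)%N -> (F s).[k%:R] = (C P k s)%:R) :
  galg_mul (fun pi => evalQ (F pi) (xvar * (2%:R^-1)%:P%:P)) (phi (n:=n'.+1) yvar) =
  (fun pi => evalQ (F pi) (xvar * yvar * (2%:R^-1)%:P%:P)).
Proof.
apply: functional_extensionality => s.
apply/eqP; rewrite -subr_eq0; apply/eqP; apply: bipoly_eq0 => k m.
have h1 : (k.+1.*2)%:R * (2%:R)^-1 = (k.+1)%:R :> rat.
  by rewrite -muln2 natrM mulfK.
have h2 : (k.+1.*2)%:R * (m.+1)%:R * (2%:R)^-1 = (k.+1 * m.+1)%:R :> rat.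
  by rewrite -muln2 natrM mulrAC mulfK // natrM.
rewrite evB ev_evalQ !evM evX evY evC h2 hF ?muln_gt0 // C_prod // natr_sum.
apply/eqP; rewrite subr_eq0; apply/eqP.
rewrite /galg_mul ev_sum; apply: eq_bigr => a _; rewrite ev_sum natr_sum.
apply: eq_bigr => b _.
rewrite evM ev_evalQ evM evX evC h1 hF // /phi ev_evalQ evY.
by rewrite binom_eval ?des_le // B_count natrM.
Qed.

Theorem theorem3p7 (n : nat) (hn : (1 <= n)%N) :
  galg_mul (rho (n:=n) xvar) (phi (n:=n) yvar) = rho (n:=n) (xvar * yvar) /\
  galg_mul (rhobar (n:=n) xvar) (phi (n:=n) yvar) = rhobar (n:=n) (xvar * yvar).
Proof.
case: n hn => // n' _.
have hP1 : forall a b, odd (a.*2 + b)%N = odd b by move=> a b; rewrite oddD odd_double.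
have hP2 : forall a b, ~~ odd (a.*2 + b)%N = ~~ odd b by move=> a b; rewrite hP1.
split.
- apply: (@main_gen n' (fun x => odd x) hP1) => s k hk.
  exact: (@C_spec n' (fun x => odd x) hP1 s k hk).
- apply: (@main_gen n' (fun x => ~~ odd x) hP2) => s k hk.
  exact: (@C_spec n' (fun x => ~~ odd x) hP2 s k hk).
Qed.
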